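(* (i) $H^\infty$ acts transitively on $\Sigma$; (ii) $H^\infty[3]$ acts transitively on $\Sigma[3]$; (iii) for each $\alpha\in\Sigma$, the set of elements of $\Sigma$ orthogonal to $\alpha$ equals $g(\Sigma[3])$ for some $g\in H^\infty$; (iv) for each $\alpha\in\Sigma$, the stabilizer of $\alpha$ in $H^\infty$ contains a subgroup conjugate (in $H^\infty$) to $H^\infty[3]$, where $H^\infty[3]$ is regarded as acting on $\mathbb{R}^4$ by fixing the first coordinate.
   Context: Let $\tau=(1+\sqrt5)/2$, $\tau'=(1-\sqrt5)/2$. Let $\Delta\subset\mathbb{R}^4$ be the set of 120 vectors consisting of: the 8 vectors obtained from $(\pm1,0,0,0)$ by permuting coordinates; the 16 vectors $\frac12(\pm1,\pm1,\pm1,\pm1)$; and the 96 vectors obtained from $\frac12(0,\pm1,\pm\tau',\pm\tau)$ (all sign choices) by even permutations of the coordinates; $\Delta'$ is its image under $\tau\leftrightarrow\tau'$ in each coordinate. For a unit vector $a$, $r_a(x)=x-2(x\cdot a)a$; $H^\infty$ is the group generated by $r_a$, $a\in\Delta\cup\Delta'$, and $\Sigma=H^\infty(\Delta\cup\Delta')$. Let $V=\{x\in\mathbb{R}^4:x_1=0\}$, $\Delta[3]=\Delta\cap V$, $\Delta[3]'=\Delta'\cap V$, $H^\infty[3]$ the group of orthogonal maps of $V$ generated by $r_a$, $a\in\Delta[3]\cup\Delta[3]'$, and $\Sigma[3]=H^\infty[3](\Delta[3]\cup\Delta[3]')$. *)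

(* Defs.v *)
From HB Require Import structures.
From mathcomp Require Import all_boot all_order all_algebra all_fingroup.
Set Implicit Arguments. Unset Strict Implicit. Unset Printing Implicit Defensive.
Import Order.TTheory GRing.Theory Num.Theory.
Local Open Scope ring_scope.

Section Defs.
Variable R : rcfType.

(* vectors of R^4 are row vectors; a linear map g acts by x |-> x *m g *)
Definition vec := 'rV[R]_4.
Definition dot (x y : vec) : R := (x *m y^T) 0 0.

Definition tau : R := (1 + Num.sqrt 5) / 2.
Definition tau' : R := (1 - Num.sqrt 5) / 2.

(* the reflection r_a(x) = x - 2 (x.a) a, as a matrix acting on the right *)
Definition refl (a : vec) : 'M[R]_4 := 1%:M - 2 *: (a^T *m a).

(* DeltaGen t t' : the 120 vectors, with t' and t in the 3rd/4th slots of the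
   base vector (0,1,t',t).  Delta = DeltaGen tau tau',
   Delta' = DeltaGen tau' tau (image under tau <-> tau'). *)
Definition DeltaGen (t t' : R) (x : vec) : Prop :=
  (exists (i : 'I_4) (b : bool), x = (-1) ^+ b *: delta_mx 0 i)
  \/ (exists b : {ffun 'I_4 -> bool}, x = \row_i ((-1) ^+ b i / 2))
  \/ (exists s : 'S_4, ~~ odd_perm s /\
        exists b : {ffun 'I_4 -> bool},
          x = \row_i ((-1) ^+ b (s i) * [:: 0; 1; t'; t]`_(s i) / 2)).

Definition Delta : vec -> Prop := DeltaGen tau tau'.
Definition Delta' : vec -> Prop := DeltaGen tau' tau.
Definition DD (a : vec) : Prop := Delta a \/ Delta' a.

Definition DD3 (a : vec) : Prop := DD a /\ a 0 0 = 0.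

Inductive GenGroup (S : vec -> Prop) : 'M[R]_4 -> Prop :=
  | GG_one : GenGroup S 1%:M
  | GG_gen a : S a -> GenGroup S (refl a)
  | GG_mul g h : GenGroup S g -> GenGroup S h -> GenGroup S (g *m h)
  | GG_inv g : GenGroup S g -> GenGroup S (invmx g).

Definition Hinf := GenGroup DD.
Definition H3 := GenGroup DD3.

Definition Orbit (S : vec -> Prop) (x : vec) : Prop :=
  exists g a, GenGroup S g /\ S a /\ x = a *m g.

Definition Sigma := Orbit DD.
Definition Sigma3 := Orbit DD3.

End Defs.

(* Main.v *)
Require Import Defs.
From HB Require Import structures.
From mathcomp Require Import all_boot all_order all_algebra all_fingroup.
From mathcomp Require Import zify ring.
Import Order.TTheory GRing.Theory Num.Theory.
Local Open Scope ring_scope.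

(* ---------- concrete arithmetic in Z[tau] ---------- *)
Definition Zt := (int * int)%type.
Definition zadd (x y : Zt) : Zt := (x.1 + y.1, x.2 + y.2).
Definition zmul (x y : Zt) : Zt := (x.1*y.1 + x.2*y.2, x.1*y.2 + x.2*y.1 + x.2*y.2).
Definition zsc (n : int) (x : Zt) : Zt := (n * x.1, n * x.2).
Definition V4 := (Zt * Zt * Zt * Zt)%type.
Definition mkV (a b c d : Zt) : V4 := (a,b,c,d).
Definition g0 (w : V4) := w.1.1.1.
Definition g1 (w : V4) := w.1.1.2.
Definition g2 (w : V4) := w.1.2.
Definition g3 (w : V4) := w.2.
Definition mapV (f : Zt -> Zt) (w : V4) : V4 := mkV (f (g0 w)) (f (g1 w)) (f (g2 w)) (f (g3 w)).
Definition dotV (w u : V4) : Zt :=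
  zadd (zadd (zadd (zmul (g0 w) (g0 u)) (zmul (g1 w) (g1 u))) (zmul (g2 w) (g2 u))) (zmul (g3 w) (g3 u)).
Definition rc (d x y : Zt) : Zt := zadd (zsc 2 x) (zsc (-1) (zmul d y)).
Definition reflV (w u : V4) : V4 :=
  let d := dotV w u in
  mkV (rc d (g0 w) (g0 u)) (rc d (g1 w) (g1 u)) (rc d (g2 w) (g2 u)) (rc d (g3 w) (g3 u)).
Definition zdv (m : int) (x : Zt) : bool := (m %| x.1)%Z && (m %| x.2)%Z.
Definition alldv (m : int) (w : V4) : bool := [&& zdv m (g0 w), zdv m (g1 w), zdv m (g2 w) & zdv m (g3 w)].
Definition zdiv (m : int) (x : Zt) : Zt := ((x.1 %/ m)%Z, (x.2 %/ m)%Z).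
Definition zmod (m : int) (x : Zt) : Zt := ((x.1 %% m)%Z, (x.2 %% m)%Z).
Definition step1 (w u : V4) : option V4 :=
  let r := reflV w u in if alldv 2 r then Some (mapV (zdiv 2) r) else None.
Definition grow (U : seq V4) (S : seq V4) : seq V4 :=
  undup (S ++ pmap id [seq step1 w u | w <- S, u <- U]).
Fixpoint growN n U S := if n is n'.+1 then grow U (growN n' U S) else S.
Definition O : Zt := (1,0). Definition T : Zt := (0,1). Definition Tp : Zt := (1,-1).
Definition Z0 : Zt := (0,0). Definition two : Zt := (2,0). Definition mO : Zt := (-1,0).
Definition U4 : seq V4 := [:: mkV two Z0 Z0 Z0; mkV Z0 two Z0 Z0; mkV Z0 Z0 two Z0; mkV Z0 Z0 Z0 two;
  mkV O O O O; mkV O mO O O; mkV Z0 O Tp T; mkV Z0 O T Tp].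
Definition Cl : seq Zt := [seq x <- [seq (a,b) | a <- [:: -2;-1;0;1;2], b <- [:: -2;-1;0;1;2]] |
   2*x.1*x.1 + 2*x.1*x.2 + 3*x.2*x.2 <= 8].
Definition e1c : V4 := mkV two Z0 Z0 Z0.
Definition e2c : V4 := mkV Z0 two Z0 Z0.
Definition cl4 := growN 6 U4 [:: e1c].
Definition check4 := all (fun a => all (fun b => all (fun c => all (fun d =>
   (dotV (mkV a b c d) (mkV a b c d) == (4,0)) ==> (mkV a b c d \in cl4)) Cl) Cl) Cl) Cl.
Lemma check4_ok : check4. Proof. vm_compute. reflexivity. Qed.
Definition U3 : seq V4 := [:: mkV Z0 two Z0 Z0; mkV Z0 Z0 two Z0; mkV Z0 Z0 Z0 two; mkV Z0 O Tp T; mkV Z0 O T Tp].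
Definition cl3 := growN 6 U3 [:: e2c].
Definition check3 := all (fun b => all (fun c => all (fun d =>
   (dotV (mkV Z0 b c d) (mkV Z0 b c d) == (4,0)) ==> (mkV Z0 b c d \in cl3)) Cl) Cl) Cl.
Lemma check3_ok : check3. Proof. vm_compute. reflexivity. Qed.
Definition sgn (b : bool) (x : Zt) : Zt := if b then zsc (-1) x else x.
Definition bs := [:: false; true].
Definition Ures : seq V4 := flatten [seq [seq mkV Z0 (sgn b.1.1 O) (sgn b.1.2 xy.1) (sgn b.2 xy.2)
   | xy <- [:: (Tp,T); (T,Tp)]] | b <- [seq (x,y) | x <- [seq (p,q) | p <- bs, q <- bs], y <- bs]].
Definition R4 : seq int := [:: 0;1;2;3].
Definition R4p : seq Zt := [seq (a,b) | a <- R4, b <- R4].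
Definition checkres := all (fun b => all (fun c => all (fun d =>
   let r := mkV Z0 b c d in
   (zdv 4 (dotV r r) && ~~ alldv 2 r) ==> has (fun u => alldv 4 (reflV r u)) Ures) R4p) R4p) R4p.
Lemma checkres_ok : checkres. Proof. vm_compute. reflexivity. Qed.

Lemma nat_sq5 (n m k : nat) : (k < n)%N -> (m * m = 5 * (k * k))%N -> k = 0%N.
Proof.
elim: n m k => [|n IH] m k //= hk e.
have p5 : prime 5 by [].
have d5m : (5 %| m)%N.
  have : (5 %| m * m)%N by rewrite e dvdn_mulr.
  by rewrite Euclid_dvdM // orbb.
case/dvdnP: d5m => m' em; subst m.
have e2 : (k * k = 5 * (m' * m'))%N by lia.
have d5k : (5 %| k)%N.
  have : (5 %| k * k)%N by rewrite e2 dvdn_mulr.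
  by rewrite Euclid_dvdM // orbb.
case/dvdnP: d5k => k' ek; subst k.
have e3 : (m' * m' = 5 * (k' * k'))%N by lia.
case: (posnP k') => [->//|kp].
have := IH m' k'. rewrite e3 => /(_ _ erefl) h. 
have : (k' < n)%N by lia.
by move/h => ->.
Qed.

Lemma int_sq5 (x y : int) : x * x = 5 * (y * y) -> y = 0.
Proof.
move=> e.
have e' : (`|x| * `|x| = 5 * (`|y| * `|y|))%N by nia.
have := @nat_sq5 (`|y|.+1) _ _ (ltnSn _) e'.
by move/eqP; rewrite absz_eq0 => /eqP.
Qed.

Section RR.
Variable R : rcfType.
Notation tau := (tau R).
Definition phi (x : Zt) : R := x.1%:~R + x.2%:~R * tau.

Lemma sqrt5 : Num.sqrt (5 : R) ^+ 2 = 5.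
Proof. by rewrite sqr_sqrtr // ler0n. Qed.

Lemma tau2 : tau ^+ 2 = tau + 1.
Proof.
rewrite /Defs.tau. apply/eqP; rewrite -subr_eq0.
have -> : ((1 + Num.sqrt 5) / 2) ^+ 2 - ((1 + Num.sqrt 5) / 2 + 1) = (Num.sqrt (5:R) ^+ 2 - 5) / 4 :> R.
  by field.
by rewrite sqrt5 subrr mul0r.
Qed.

Lemma tau'E : tau' R = 1 - tau.
Proof. by rewrite /tau' /Defs.tau; field. Qed.

Lemma phi_add x y : phi (zadd x y) = phi x + phi y.
Proof. rewrite /phi /zadd /= !intrD; ring. Qed.
Lemma phi_sc n x : phi (zsc n x) = n%:~R * phi x.
Proof. rewrite /phi /zsc /= !intrM; ring. Qed.
Lemma phi_mul x y : phi (zmul x y) = phi x * phi y.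
Proof.
rewrite /phi /zmul /= !intrD !intrM.
apply/eqP; rewrite -subr_eq0; apply/eqP.
have -> : x.1%:~R * y.1%:~R + x.2%:~R * y.2%:~R + (x.1%:~R * y.2%:~R + x.2%:~R * y.1%:~R + x.2%:~R * y.2%:~R) * tau -
  (x.1%:~R + x.2%:~R * tau) * (y.1%:~R + y.2%:~R * tau) = x.2%:~R * y.2%:~R * (tau + 1 - tau ^+ 2) :> R by ring.
by rewrite tau2 subrr mulr0.
Qed.

Lemma phi0 x : phi x = 0 -> x = Z0.
Proof.
case: x => a b; rewrite /phi /= => e.
have hb : b = 0.
  apply: (@int_sq5 (2 * a + b) b).
  apply: (@intr_inj R). rewrite !intrM !intrD.
  have et : b%:~R * tau = - a%:~R by apply/eqP; rewrite -addr_eq0 addrC e.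
  have : (2 * (b%:~R * tau) - b%:~R) ^+ 2 = 5 * b%:~R ^+ 2 :> R.
    rewrite /Defs.tau; have := sqrt5; move=> s5.
    have -> : (2 * (b%:~R * ((1 + Num.sqrt 5) / 2)) - b%:~R) = b%:~R * Num.sqrt 5 :> R by field.
    by rewrite exprMn s5 mulrC.
  rewrite et => h.
  transitivity ((2 * - a%:~R - b%:~R) ^+ 2 : R); first ring.
  rewrite h; ring.
subst b; move: e; rewrite mul0r addr0 => /eqP; rewrite intr_eq0 => /eqP ->; done.
Qed.

Lemma phi_inj x y : phi x = phi y -> x = y.
Proof.
move=> e; have := @phi0 (zadd x (zsc (-1) y)).
rewrite phi_add phi_sc e; move=> /(_ ltac:(by rewrite mulN1r addrN)) [].
case: x y {e} => a b [c d] /=; rewrite /zsc /=.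
by move=> h1 h2; congr pair; lia.
Qed.

End RR.

Definition i0 : 'I_4 := @Ordinal 4 0 isT.
Definition i1 : 'I_4 := @Ordinal 4 1 isT.
Definition i2 : 'I_4 := @Ordinal 4 2 isT.
Definition i3 : 'I_4 := @Ordinal 4 3 isT.
Definition cf (w : V4) (i : 'I_4) : Zt :=
  match val i with 0 => g0 w | 1 => g1 w | 2 => g2 w | _ => g3 w end.

Section RC.
Variable R : rcfType.
Notation phi := (@phi R).

Lemma sum4 (F : 'I_4 -> R) : \sum_i F i = F i0 + F i1 + F i2 + F i3.
Proof.
rewrite !big_ord_recl big_ord0 addr0 !addrA.
by congr (_ + _ + _ + _); congr F; apply/val_inj.
Qed.

Lemma dotE (x y : vec R) : dot x y = \sum_i x 0 i * y 0 i.
Proof. by rewrite /dot mxE; apply: eq_bigr => i _; rewrite mxE. Qed.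

Definition ofV (w : V4) (k : nat) : vec R := \row_i (phi (cf w i) / 2 ^+ k).

Lemma two_neq0 : (2 : R) != 0. Proof. by rewrite pnatr_eq0. Qed.
Lemma exp2_neq0 k : (2 : R) ^+ k != 0. Proof. by rewrite expf_neq0 // two_neq0. Qed.

Lemma phi_dotV w u : phi (dotV w u) =
  phi (g0 w) * phi (g0 u) + phi (g1 w) * phi (g1 u) + phi (g2 w) * phi (g2 u) + phi (g3 w) * phi (g3 u).
Proof. by rewrite /dotV !phi_add !phi_mul. Qed.

Lemma dot_ofV w u k m : dot (ofV w k) (ofV u m) = phi (dotV w u) / 2 ^+ (k + m).
Proof.
rewrite dotE sum4 !mxE /= phi_dotV exprD.
have := exp2_neq0 k; have := exp2_neq0 m => h1 h2.
by field; rewrite h1 h2.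
Qed.

Lemma refl_mul (x a : vec R) : x *m refl a = x - (2 * dot x a) *: a.
Proof.
rewrite /refl mulmxBr mulmx1 -scalemxAr mulmxA [x *m a^T]mx11_scalar mul_scalar_mx scalerA.
by rewrite /dot mulrC.
Qed.

Lemma refl_sym (a : vec R) : (refl a)^T = refl a.
Proof. by rewrite /refl linearB /= trmx1 linearZ /= trmx_mul trmxK. Qed.

End RC.

Section RD.
Variable R : rcfType.
Lemma refl_invol (a : vec R) : dot a a = 1 -> refl a *m refl a = 1%:M.
Proof.
move=> h; set P := a^T *m a.
have PP : P *m P = P.
  rewrite /P mulmxA -(mulmxA a^T) [a *m a^T]mx11_scalar.
  have -> : (a *m a^T) 0 0 = dot a a by [].
  by rewrite h mulmx1.
have e1 : (1%:M - 2 *: P) *m P = - P.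
  rewrite mulmxBl mul1mx -scalemxAl PP -{1}(scale1r P) -scalerBl.
  have -> : (1 - 2 : R) = -1 by ring.
  by rewrite scaleN1r.
by rewrite /refl -/P mulmxBr mulmx1 -scalemxAr e1 scalerN opprK subrK.
Qed.

Notation phi := (@phi R).
Notation ofV := (@ofV R).

Lemma phi_rc d x y : phi (rc d x y) = 2 * phi x - phi d * phi y.
Proof. rewrite /rc phi_add !phi_sc phi_mul; ring. Qed.

Lemma ofV_refl w u k : ofV w k *m refl (ofV u 1) = ofV (reflV w u) k.+1.
Proof.
rewrite refl_mul dot_ofV addn1; apply/rowP => j; rewrite !mxE expr1.
have := exp2_neq0 R k; move=> hk.
have e : forall x y : Zt, phi x / 2 ^+ k - 2 * (phi (dotV w u) / 2 ^+ k.+1) * (phi y / 2)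
   = phi (rc (dotV w u) x y) / 2 ^+ k.+1.
  by move=> x y; rewrite phi_rc exprS; field; rewrite ?exp2_neq0.
by case: j => [[|[|[|[|//]]]] Hj]; rewrite /= e.
Qed.

Lemma ofV_div (m : int) j r k : (m%:~R : R) = 2 ^+ j -> alldv m r ->
  ofV r (k + j) = ofV (mapV (zdiv m) r) k.
Proof.
move=> hm /and4P [h0 h1 h2 h3].
have e : forall x : Zt, zdv m x -> phi x / 2 ^+ (k + j) = phi (zdiv m x) / 2 ^+ k.
  case=> a b; rewrite /zdv /= => /andP [ha hb]; rewrite /phi /zdiv /=.
  rewrite -{1}(divzK ha) -{1}(divzK hb) !intrM hm exprD.
  have := exp2_neq0 R k; have := exp2_neq0 R j => h1' h2'.
  by field; rewrite ?exp2_neq0.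
apply/rowP => i; rewrite !mxE.
by case: i => [[|[|[|[|//]]]] Hi]; rewrite /= e.
Qed.

Lemma ofV_dbl w k : ofV (mapV (zsc 2) w) k.+1 = ofV w k.
Proof.
have e : forall x : Zt, phi (zsc 2 x) / 2 ^+ k.+1 = phi x / 2 ^+ k.
  move=> x; rewrite phi_sc exprS; have := exp2_neq0 R k => h.
  by field; rewrite ?exp2_neq0.
apply/rowP => i; rewrite !mxE.
by case: i => [[|[|[|[|//]]]] Hi]; rewrite /= e.
Qed.

Definition nrm (k : nat) : Zt := (4 ^+ k, 0).
Lemma phi_nrm k : phi (nrm k) = 4 ^+ k.
Proof. by rewrite /phi /nrm /= mul0r addr0 rmorphXn. Qed.

Lemma ofV_unit w k : dotV w w = nrm k -> dot (ofV w k) (ofV w k) = 1.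
Proof.
move=> h; rewrite dot_ofV h phi_nrm addnn -mul2n exprM.
have -> : (2:R) ^+ 2 = 4 by ring.
by rewrite divff // expf_neq0 // pnatr_eq0.
Qed.
End RD.

Section RE.
Variable R : rcfType.
Notation phi := (@phi R).
Notation ofV := (@ofV R).

Lemma nrm_refl w u k : dotV u u = nrm 1 -> dotV w w = nrm k ->
  dotV (reflV w u) (reflV w u) = nrm k.+1.
Proof.
move=> hu hw; apply: (@phi_inj R).
move: hu hw => /(congr1 phi) hu /(congr1 phi) hw.
rewrite !phi_nrm !phi_dotV in hu hw *.
rewrite /reflV /g0 /g1 /g2 /g3 /= !phi_rc.
rewrite /g0 /g1 /g2 /g3 /= in hu hw.
rewrite phi_dotV /g0 /g1 /g2 /g3 /=.
set D := (phi w.1.1.1 * phi u.1.1.1 + phi w.1.1.2 * phi u.1.1.2 + phi w.1.2 * phi u.1.2 + phi w.2 * phi u.2).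
transitivity (4 * (phi w.1.1.1 * phi w.1.1.1 + phi w.1.1.2 * phi w.1.1.2 + phi w.1.2 * phi w.1.2 + phi w.2 * phi w.2)
  - 4 * D * D + D * D * (phi u.1.1.1 * phi u.1.1.1 + phi u.1.1.2 * phi u.1.1.2 + phi u.1.2 * phi u.1.2 + phi u.2 * phi u.2)).
  rewrite /D; ring.
rewrite hu hw !exprS expr0; ring.
Qed.

Lemma nrm_dbl w k : dotV w w = nrm k -> dotV (mapV (zsc 2) w) (mapV (zsc 2) w) = nrm k.+1.
Proof.
move=> hw; apply: (@phi_inj R).
move: hw => /(congr1 phi) hw.
rewrite !phi_nrm !phi_dotV in hw *.
rewrite /mapV /g0 /g1 /g2 /g3 /= !phi_sc.
rewrite /g0 /g1 /g2 /g3 /= in hw.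
rewrite exprS -hw; ring.
Qed.

Lemma phi_zdiv m x : zdv m x -> phi x = m%:~R * phi (zdiv m x).
Proof.
case: x => a b; rewrite /zdv /= => /andP [ha hb]; rewrite /phi /zdiv /=.
rewrite -{1}(divzK ha) -{1}(divzK hb) !intrM; ring.
Qed.

Lemma nrm_div (m : int) j r k : (m%:~R : R) = 2 ^+ j -> alldv m r -> dotV r r = nrm (k + j) ->
  dotV (mapV (zdiv m) r) (mapV (zdiv m) r) = nrm k.
Proof.
move=> hm /and4P [h0 h1 h2 h3] hw; apply: (@phi_inj R).
move: hw => /(congr1 phi) hw.
rewrite !phi_nrm !phi_dotV in hw *.
rewrite (phi_zdiv _ _ h0) (phi_zdiv _ _ h1) (phi_zdiv _ _ h2) (phi_zdiv _ _ h3) hm in hw.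
rewrite /mapV /g0 /g1 /g2 /g3 /=.
rewrite /g0 /g1 /g2 /g3 /= in hw.
have h4 : (4 : R) ^+ j != 0 by rewrite expf_neq0 // pnatr_eq0.
apply: (mulfI h4).
have e : (4 : R) ^+ j = 2 ^+ j * 2 ^+ j by rewrite -exprMn; congr (_ ^+ _); ring.
rewrite -exprD addnC -hw e; ring.
Qed.
End RE.

Section RF.
Variable R : rcfType.
Notation phi := (@phi R).
Notation ofV := (@ofV R).

Definition presX (g : 'M[R]_4) := forall w k, dotV w w = nrm k ->
  exists w' k', ofV w k *m g = ofV w' k' /\ dotV w' w' = nrm k'.

Definition concS (S : vec R -> Prop) := forall a, S a -> exists u, a = ofV u 1 /\ dotV u u = nrm 1.

Lemma orth_inv (g : 'M[R]_4) : g *m g^T = 1%:M -> invmx g = g^T.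
Proof.
move=> h; have [gu _] := mulmx1_unit h.
by rewrite -[invmx g]mulmx1 -h mulmxA mulVmx // mul1mx.
Qed.

Lemma GG_inv_all S g : concS S -> GenGroup S g ->
  g *m g^T = 1%:M /\ presX g /\ presX g^T.
Proof.
move=> hS; elim=> [|a ha|g1 g2 _ [o1 [p1 q1]] _ [o2 [p2 q2]]|g1 _ [o1 [p1 q1]]].
- by rewrite trmx1 mulmx1; split=> //; split=> w k h; exists w, k; rewrite mulmx1.
- have [u [-> hu]] := hS a ha.
  have pr : presX (refl (ofV u 1)).
    move=> w k hw; exists (reflV w u), k.+1; split; first exact: ofV_refl.
    exact: nrm_refl.
  rewrite refl_sym; split=> //; apply: refl_invol; exact: ofV_unit.
- split; first by rewrite trmx_mul mulmxA -(mulmxA g1) o2 mulmx1 o1.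
  split.
    move=> w k hw; have [w1 [k1 [e1 n1]]] := p1 w k hw.
    have [w2 [k2 [e2 n2]]] := p2 w1 k1 n1.
    by exists w2, k2; rewrite mulmxA e1 e2.
  move=> w k hw; have [w1 [k1 [e1 n1]]] := q2 w k hw.
  have [w2 [k2 [e2 n2]]] := q1 w1 k1 n1.
  by exists w2, k2; rewrite trmx_mul mulmxA e1 e2.
- rewrite orth_inv // trmxK; split; last by split.
  exact: mulmx1C.
Qed.

Lemma grow_sound (S : vec R -> Prop) (U : seq V4) (t : vec R) n (s0 : seq V4) :
  (forall u, u \in U -> S (ofV u 1) /\ dotV u u = nrm 1) ->
  (forall w, w \in s0 -> exists h, GenGroup S h /\ ofV w 1 *m h = t) ->
  forall w, w \in growN n U s0 -> exists h, GenGroup S h /\ ofV w 1 *m h = t.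
Proof.
move=> hU h0; elim: n => [|n IH] w //=; first exact: h0.
rewrite /grow mem_undup mem_cat => /orP [/IH //|].
rewrite mem_pmap map_id => /allpairsP [[x u] /= [hx hu e]].
move: e; rewrite /step1; case: ifP => // hd [ew].
have [Su nu] := hU u hu.
have [h [Sh eh]] := IH x hx.
exists (refl (ofV u 1) *m h); split; first by apply: GG_mul => //; apply: GG_gen.
have -> : ofV w 1 = ofV x 1 *m refl (ofV u 1).
  rewrite ofV_refl ew -(@ofV_div R 2 1 _ 1) //; by rewrite expr1.
by rewrite -mulmxA (mulmxA (refl _)) refl_invol ?mul1mx // ofV_unit.
Qed.

End RF.

Definition vecOf (f : 'I_4 -> Zt) : V4 := mkV (f i0) (f i1) (f i2) (f i3).
Lemma cf_vecOf f j : cf (vecOf f) j = f j.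
Proof. by case: j => [[|[|[|[|//]]]] Hj]; congr f; apply/val_inj. Qed.

Section RG.
Variable R : rcfType.
Notation phi := (@phi R).
Notation ofV := (@ofV R).

Lemma phi_sgn b x : phi (sgn b x) = (-1) ^+ b * phi x.
Proof. by case: b; rewrite /sgn ?phi_sc ?expr1 ?expr0 ?mul1r //. Qed.

Lemma conc_of (f : 'I_4 -> Zt) (a : vec R) : (forall j, a 0 j = phi (f j) / 2) ->
  \sum_j phi (f j) ^+ 2 = 4 -> exists u, a = ofV u 1 /\ dotV u u = nrm 1.
Proof.
move=> ha hs; exists (vecOf f); split.
  by apply/rowP => j; rewrite !mxE ha cf_vecOf expr1.
apply: (@phi_inj R); rewrite phi_dotV phi_nrm expr1 -hs sum4 !expr2.
by rewrite /g0 /g1 /g2 /g3 /=.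
Qed.

Lemma phi_Z0 : phi Z0 = 0. Proof. by rewrite /phi /= mul0r addr0. Qed.
Lemma phi_O : phi O = 1. Proof. by rewrite /phi /= mul0r addr0. Qed.
Lemma phi_two : phi two = 2. Proof. by rewrite /phi /= mul0r addr0. Qed.
Lemma phi_T : phi T = tau R. Proof. by rewrite /phi /= add0r mul1r. Qed.
Lemma phi_Tp : phi Tp = tau' R. Proof. by rewrite /phi /= tau'E mulN1r. Qed.

Lemma sign_sq (b : bool) : ((-1) ^+ b : R) ^+ 2 = 1.
Proof. exact: sqrr_sign. Qed.

Lemma DeltaGen_conc (t t' : R) (ct ct' : Zt) : phi ct = t -> phi ct' = t' -> t ^+ 2 + t' ^+ 2 = 3 ->
  forall a, DeltaGen t t' a -> exists u, a = ofV u 1 /\ dotV u u = nrm 1.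
Proof.
move=> ht ht' h3 a [[i [b ->]] | [[b ->] | [s [_ [b ->]]]]].
- apply: (@conc_of (fun j => if j == i then sgn b two else Z0)).
    move=> j; rewrite !mxE eqxx /=; case: (j == i).
      by rewrite phi_sgn phi_two /= -mulrA divff ?two_neq0.
    by rewrite phi_Z0 mul0r mulr0.
  rewrite (bigD1 i) //= eqxx big1 ?addr0 => [|j /negbTE ->]; last by rewrite phi_Z0 expr2 mulr0.
  by rewrite phi_sgn phi_two exprMn sign_sq mul1r; ring.
- apply: (@conc_of (fun j => sgn (b j) O)).
    by move=> j; rewrite !mxE phi_sgn phi_O mulr1.
  by rewrite sum4 !phi_sgn !phi_O !mulr1 !sign_sq; ring.
- pose L := [:: Z0; O; ct'; ct].
  have hL : forall k : 'I_4, [:: 0; 1; t'; t]`_k = phi (nth Z0 L k).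
    by case=> [[|[|[|[|//]]]] Hk] /=; rewrite ?phi_Z0 ?phi_O.
  apply: (@conc_of (fun j => sgn (b (s j)) (nth Z0 L (s j)))).
    by move=> j; rewrite !mxE phi_sgn hL.
  under eq_bigr => j _ do rewrite phi_sgn exprMn sign_sq mul1r.
  have -> : \sum_(j : 'I_4) phi (nth Z0 L (s j)) ^+ 2 = \sum_(j : 'I_4) phi (nth Z0 L j) ^+ 2.
    by rewrite [in RHS](reindex_inj (@perm_inj _ s)).
  rewrite sum4 /= phi_Z0 phi_O ht ht'.
  transitivity (1 + (t ^+ 2 + t' ^+ 2)); first ring.
  by rewrite h3; ring.
Qed.

Lemma tau_sq3 : tau R ^+ 2 + tau' R ^+ 2 = 3.
Proof. rewrite tau'E; have := tau2 R => h. 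
transitivity (2 * tau R ^+ 2 - 2 * tau R + 1); first ring. rewrite h; ring. Qed.

Lemma DD_conc : @concS R (@DD R).
Proof.
move=> a [h|h].
  by apply: (DeltaGen_conc _ _ _ _ phi_T phi_Tp tau_sq3); exact: h.
apply: (DeltaGen_conc _ _ _ _ phi_Tp phi_T); last exact: h.
by rewrite addrC tau_sq3.
Qed.
End RG.

Section RH.
Variable R : rcfType.
Notation phi := (@phi R).
Notation ofV := (@ofV R).

Lemma gen1 i : DeltaGen (tau R) (tau' R) (ofV (vecOf (fun j => if j == i then two else Z0)) 1) /\
               DeltaGen (tau' R) (tau R) (ofV (vecOf (fun j => if j == i then two else Z0)) 1).
Proof.
have e : ofV (vecOf (fun j => if j == i then two else Z0)) 1 = (-1) ^+ false *: delta_mx 0 i.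
  apply/rowP => j; rewrite !mxE cf_vecOf eqxx /= expr0 mul1r expr1.
  case: (j == i); first by rewrite phi_two divff ?two_neq0.
  by rewrite phi_Z0 mul0r.
by rewrite e; split; left; exists i, false.
Qed.

Lemma gen2 (bf : {ffun 'I_4 -> bool}) :
  DeltaGen (tau R) (tau' R) (ofV (vecOf (fun j => sgn (bf j) O)) 1) /\
  DeltaGen (tau' R) (tau R) (ofV (vecOf (fun j => sgn (bf j) O)) 1).
Proof.
have e : ofV (vecOf (fun j => sgn (bf j) O)) 1 = \row_i ((-1) ^+ bf i / 2).
  by apply/rowP => j; rewrite !mxE cf_vecOf phi_sgn phi_O mulr1 expr1.
by rewrite e; split; right; left; exists bf.
Qed.

Lemma gen3 (t t' : R) (ct ct' : Zt) (b1 b2 b3 : bool) : phi ct = t -> phi ct' = t' ->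
  DeltaGen t t' (ofV (mkV Z0 (sgn b1 O) (sgn b2 ct') (sgn b3 ct)) 1).
Proof.
move=> ht ht'; right; right; exists 1%g; split; first by rewrite odd_perm1.
exists [ffun j : 'I_4 => nth false [:: false; b1; b2; b3] j].
apply/rowP => j; rewrite !mxE perm1 ffunE expr1.
by case: j => [[|[|[|[|//]]]] Hj] /=; rewrite ?phi_sgn ?phi_Z0 ?phi_O ?ht ?ht' ?expr0 ?mul1r ?mulr1 ?mulr0.
Qed.


Lemma first0 u : g0 u = Z0 -> (ofV u 1) 0 0 = 0.
Proof. by move=> h; rewrite mxE; have -> : cf u 0 = g0 u by []; rewrite h phi_Z0 mul0r. Qed.

Lemma gen2a : DeltaGen (tau R) (tau' R) (ofV (mkV O O O O) 1) /\ DeltaGen (tau' R) (tau R) (ofV (mkV O O O O) 1).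
Proof.
have -> : mkV O O O O = vecOf (fun j => sgn ([ffun _ => false] j) O) by rewrite /vecOf !ffunE.
exact: gen2.
Qed.
Lemma gen2b : DeltaGen (tau R) (tau' R) (ofV (mkV O mO O O) 1) /\ DeltaGen (tau' R) (tau R) (ofV (mkV O mO O O) 1).
Proof.
have -> : mkV O mO O O = vecOf (fun j => sgn ([ffun j => j == i1] j) O) by rewrite /vecOf !ffunE.
exact: gen2.
Qed.

Lemma gen10 : DeltaGen (tau R) (tau' R) (ofV (mkV two Z0 Z0 Z0) 1) /\ DeltaGen (tau' R) (tau R) (ofV (mkV two Z0 Z0 Z0) 1).
Proof.
have -> : mkV two Z0 Z0 Z0 = vecOf (fun j => if j == i0 then two else Z0) by rewrite /vecOf.
exact: gen1.
Qed.
Lemma gen11 : DeltaGen (tau R) (tau' R) (ofV (mkV Z0 two Z0 Z0) 1) /\ DeltaGen (tau' R) (tau R) (ofV (mkV Z0 two Z0 Z0) 1).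
Proof.
have -> : mkV Z0 two Z0 Z0 = vecOf (fun j => if j == i1 then two else Z0) by rewrite /vecOf.
exact: gen1.
Qed.
Lemma gen12 : DeltaGen (tau R) (tau' R) (ofV (mkV Z0 Z0 two Z0) 1) /\ DeltaGen (tau' R) (tau R) (ofV (mkV Z0 Z0 two Z0) 1).
Proof.
have -> : mkV Z0 Z0 two Z0 = vecOf (fun j => if j == i2 then two else Z0) by rewrite /vecOf.
exact: gen1.
Qed.
Lemma gen13 : DeltaGen (tau R) (tau' R) (ofV (mkV Z0 Z0 Z0 two) 1) /\ DeltaGen (tau' R) (tau R) (ofV (mkV Z0 Z0 Z0 two) 1).
Proof.
have -> : mkV Z0 Z0 Z0 two = vecOf (fun j => if j == i3 then two else Z0) by rewrite /vecOf.
exact: gen1.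
Qed.

Ltac solve_gen :=
  first [ exact: gen10.1 | exact: gen11.1 | exact: gen12.1 | exact: gen13.1
        | exact: gen2a.1 | exact: gen2b.1
        | exact: (gen3 _ _ _ _ false false false (phi_T R) (phi_Tp R))
        | exact: (gen3 _ _ _ _ false false false (phi_Tp R) (phi_T R)) ].


Lemma U4_ok u : u \in U4 -> DD (ofV u 1) /\ dotV u u = nrm 1.
Proof.
rewrite !inE.
repeat (case/orP; first (move/eqP->; split; [|by []]; solve [left; solve_gen | right; solve_gen])).
move/eqP->; split; [|by []]; solve [left; solve_gen | right; solve_gen].
Qed.

Lemma U3_ok u : u \in U3 -> DD3 (ofV u 1) /\ dotV u u = nrm 1.
Proof.
rewrite !inE.
repeat (case/orP; first (move/eqP->; split; [split; [solve [left; solve_gen | right; solve_gen]|exact: first0]|by []])).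
move/eqP->; split; [split; [solve [left; solve_gen | right; solve_gen]|exact: first0]|by []].
Qed.

Lemma Ures_ok u : u \in Ures -> DD3 (ofV u 1) /\ dotV u u = nrm 1.
Proof.
case/flatten_mapP => b _ /mapP [xy hxy ->].
move: hxy; rewrite !inE => /orP [] /eqP -> /=.
  split; [split; [left; exact: gen3 (phi_T R) (phi_Tp R)|exact: first0]|].
  by case: b => [[[] []] []].
split; [split; [right; exact: gen3 (phi_Tp R) (phi_T R)|exact: first0]|].
by case: b => [[[] []] []].
Qed.
End RH.

Definition addV (a b : V4) : V4 := mkV (zadd (g0 a) (g0 b)) (zadd (g1 a) (g1 b)) (zadd (g2 a) (g2 b)) (zadd (g3 a) (g3 b)).

Lemma split4z (x : Zt) : x = zadd (zmod 4 x) (zsc 4 (zdiv 4 x)).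
Proof.
case: x => a b; rewrite /zadd /zmod /zsc /zdiv /=.
by rewrite {1}(divz_eq a 4) {1}(divz_eq b 4) [_ * 4]mulrC [(_ * 4)]mulrC addrC [X in (_, X)]addrC.
Qed.

Lemma split4 w : w = addV (mapV (zmod 4) w) (mapV (zsc 4) (mapV (zdiv 4) w)).
Proof.
case: w => [[[x0 x1] x2] x3]; rewrite /addV /mapV /g0 /g1 /g2 /g3 /=.
by rewrite -!split4z.
Qed.

Lemma dv_add4 (m : int) x y : (m %| x + m * y)%Z = (m %| x)%Z.
Proof. by rewrite rpredDr // dvdz_mulr. Qed.

Lemma zdv_add4 x y : zdv 4 (zadd x (zsc 4 y)) = zdv 4 x.
Proof. by rewrite /zdv /zadd /zsc /= !dv_add4. Qed.

Lemma zdv2_add4 x y : zdv 2 (zadd x (zsc 4 y)) = zdv 2 x.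
Proof.
rewrite /zdv /zadd /zsc /=.
have e : forall a : int, 4 * a = 2 * (2 * a) by move=> a; ring.
by rewrite !e !dv_add4.
Qed.

Lemma dot_split r z : exists Y,
  dotV (addV r (mapV (zsc 4) z)) (addV r (mapV (zsc 4) z)) = zadd (dotV r r) (zsc 4 Y).
Proof.
exists (zadd (zsc 2 (dotV r z)) (zsc 4 (dotV z z))).
case: r => [[[[a0 b0] [a1 b1]] [a2 b2]] [a3 b3]].
case: z => [[[[c0 d0] [c1 d1]] [c2 d2]] [c3 d3]].
rewrite /dotV /addV /mapV /zadd /zsc /zmul /g0 /g1 /g2 /g3 /=.
congr pair; ring.
Qed.

Lemma rc_split d d' x y v : rc (zadd d (zsc 4 d')) (zadd x (zsc 4 y)) v = zadd (rc d x v) (zsc 4 (rc d' y v)).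
Proof.
case: d d' x y v => [a b] [c e] [f g] [h i] [k l].
rewrite /rc /zadd /zsc /zmul /=; congr pair; ring.
Qed.

Lemma dotl_split r z u : dotV (addV r (mapV (zsc 4) z)) u = zadd (dotV r u) (zsc 4 (dotV z u)).
Proof.
case: r => [[[[a0 b0] [a1 b1]] [a2 b2]] [a3 b3]].
case: z => [[[[c0 d0] [c1 d1]] [c2 d2]] [c3 d3]].
case: u => [[[[e0 f0] [e1 f1]] [e2 f2]] [e3 f3]].
rewrite /dotV /addV /mapV /zadd /zsc /zmul /g0 /g1 /g2 /g3 /=.
congr pair; ring.
Qed.

Lemma refl_split r z u :
  reflV (addV r (mapV (zsc 4) z)) u = addV (reflV r u) (mapV (zsc 4) (reflV z u)).
Proof.
rewrite /reflV dotl_split.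
by rewrite /addV /mapV /g0 /g1 /g2 /g3 /= !rc_split.
Qed.

Lemma alldv_add4 (m : int) r z : (m = 2 \/ m = 4) ->
  alldv m (addV r (mapV (zsc 4) z)) = alldv m r.
Proof.
move=> [->|->]; rewrite /alldv /addV /mapV /g0 /g1 /g2 /g3 /=.
  by rewrite !zdv2_add4.
by rewrite !zdv_add4.
Qed.

Lemma mod4_in (x : int) : (x %% 4)%Z \in R4.
Proof.
have h1 : 0 <= (x %% 4)%Z by rewrite modz_ge0.
have h2 : (x %% 4)%Z < 4 by rewrite ltz_pmod.
move: h1 h2; move: (x %% 4)%Z => y h1 h2.
have : y = 0 \/ y = 1 \/ y = 2 \/ y = 3 by lia.
by case=> [->|[->|[->|->]]].
Qed.

Lemma zmod4_in x : zmod 4 x \in R4p.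
Proof. by case: x => a b; rewrite /zmod /R4p; apply: allpairs_f; apply: mod4_in. Qed.

Lemma residue w : g0 w = Z0 -> zdv 4 (dotV w w) -> ~~ alldv 2 w ->
  exists2 u, u \in Ures & alldv 4 (reflV w u).
Proof.
move=> h0 hd hn.
set r := mapV (zmod 4) w; set z := mapV (zdiv 4) w.
have ew : w = addV r (mapV (zsc 4) z) by exact: split4.
have [Y eY] := dot_split r z.
have hd' : zdv 4 (dotV r r) by move: hd; rewrite ew eY zdv_add4.
have hn' : ~~ alldv 2 r by move: hn; rewrite ew alldv_add4 //; left.
have r0 : g0 r = Z0 by rewrite /r /mapV /g0 /= -/(g0 w) h0 /zmod /= mod0z.
have er : r = mkV Z0 (g1 r) (g2 r) (g3 r) by rewrite -r0 /mkV /g0 /g1 /g2 /g3; case: (r) => [[[? ?] ?] ?].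
have := checkres_ok; rewrite /checkres => /allP /(_ (g1 r) (zmod4_in _)) /allP /(_ (g2 r) (zmod4_in _))
  /allP /(_ (g3 r) (zmod4_in _)).
cbv beta; rewrite -er hd' hn' andbT implyTb => /hasP [u hu hr].
exists u => //; rewrite ew refl_split alldv_add4 //; by right.
Qed.

Lemma int5 (x : int) : -2 <= x <= 2 -> x \in [:: -2; -1; 0; 1; 2].
Proof.
move=> h; have : x = -2 \/ x = -1 \/ x = 0 \/ x = 1 \/ x = 2 by lia.
by case=> [->|[->|[->|[->|->]]]].
Qed.

Lemma inCl (a b : int) : 2*a*a + 2*a*b + 3*b*b <= 8 -> (a,b) \in Cl.
Proof.
move=> h; have hb : -2 <= b <= 2 by nia.
have ha : -2 <= a <= 2 by nia.
rewrite mem_filter; apply/andP; split; first exact: h.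
apply/allpairsP; exists (a,b); split => //=; exact: int5.
Qed.

Lemma norm_bound u : dotV u u = nrm 1 ->
  [/\ g0 u \in Cl, g1 u \in Cl, g2 u \in Cl & g3 u \in Cl].
Proof.
case: u => [[[[a0 b0] [a1 b1]] [a2 b2]] [a3 b3]].
rewrite /dotV /zadd /zmul /nrm /g0 /g1 /g2 /g3 /= => -[e1 e2].
have q0 : 0 <= 2*a0*a0 + 2*a0*b0 + 3*b0*b0 by nia.
have q1 : 0 <= 2*a1*a1 + 2*a1*b1 + 3*b1*b1 by nia.
have q2 : 0 <= 2*a2*a2 + 2*a2*b2 + 3*b2*b2 by nia.
have q3 : 0 <= 2*a3*a3 + 2*a3*b3 + 3*b3*b3 by nia.
have hs : (2*a0*a0 + 2*a0*b0 + 3*b0*b0) + (2*a1*a1 + 2*a1*b1 + 3*b1*b1) +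
          (2*a2*a2 + 2*a2*b2 + 3*b2*b2) + (2*a3*a3 + 2*a3*b3 + 3*b3*b3) = 8.
  rewrite expr1 in e1; nia.
by split; apply: inCl; lia.
Qed.

Lemma etaV u : mkV (g0 u) (g1 u) (g2 u) (g3 u) = u.
Proof. by case: u => [[[? ?] ?] ?]. Qed.

Lemma in_cl4 u : dotV u u = nrm 1 -> u \in cl4.
Proof.
move=> hu; have [h0 h1 h2 h3] := norm_bound _ hu.
have := check4_ok; rewrite /check4 => /allP /(_ _ h0) /allP /(_ _ h1) /allP /(_ _ h2) /allP /(_ _ h3).
cbv beta; rewrite etaV hu => /implyP; apply; by [].
Qed.

Lemma in_cl3 u : g0 u = Z0 -> dotV u u = nrm 1 -> u \in cl3.
Proof.
move=> hz hu; have [_ h1 h2 h3] := norm_bound _ hu.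
have := check3_ok; rewrite /check3 => /allP /(_ _ h1) /allP /(_ _ h2) /allP /(_ _ h3).
cbv beta; rewrite -hz etaV hu => /implyP; apply; by [].
Qed.

Section RK.
Variable R : rcfType.
Notation phi := (@phi R).
Notation ofV := (@ofV R).

Definition e1v : vec R := ofV e1c 1.
Definition e2v : vec R := ofV e2c 1.

Lemma GG_mono (S S' : vec R -> Prop) g : (forall a, S a -> S' a) -> GenGroup S g -> GenGroup S' g.
Proof.
move=> hS; elim=> [|a ha|g1 g2 _ h1 _ h2|g1 _ h1].
- exact: GG_one.
- exact/GG_gen/hS.
- exact: GG_mul.
- exact: GG_inv.
Qed.

Lemma DD3_DD (a : vec R) : DD3 a -> DD a. Proof. by case. Qed.

Lemma DD3_conc : @concS R (@DD3 R).
Proof. by move=> a /DD3_DD /(DD_conc R). Qed.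

Lemma H3_Hinf (g : 'M[R]_4) : H3 g -> Hinf g.
Proof. exact: GG_mono DD3_DD. Qed.

Lemma Hinf_orth (g : 'M[R]_4) : Hinf g -> g *m g^T = 1%:M.
Proof. by move=> h; case: (@GG_inv_all R _ _ (DD_conc R) h). Qed.

Lemma H3_orth (g : 'M[R]_4) : H3 g -> g *m g^T = 1%:M.
Proof. by move=> /H3_Hinf /Hinf_orth. Qed.

Lemma orth_unit (g : 'M[R]_4) : g *m g^T = 1%:M -> g \in unitmx.
Proof. by case/mulmx1_unit. Qed.

Lemma dot_e1v (a : vec R) : dot e1v a = a 0 0.
Proof.
rewrite dotE sum4 !mxE /= phi_two phi_Z0 !mul0r !addr0 divff ?two_neq0 // mul1r.
by congr (a 0 _); apply/val_inj.
Qed.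

Lemma dot_sym (x y : vec R) : dot x y = dot y x.
Proof. by rewrite !dotE; apply: eq_bigr => i _; rewrite mulrC. Qed.

Lemma H3_fix (g : 'M[R]_4) : H3 g -> e1v *m g = e1v /\ e1v *m g^T = e1v.
Proof.
elim=> [|a ha|g1 g2 _ [h1 h1'] _ [h2 h2']|g1 hg [h1 h1']].
- by rewrite trmx1 mulmx1.
- have e : e1v *m refl a = e1v.
    by rewrite refl_mul dot_e1v ha.2 mulr0 scale0r subr0.
  by rewrite refl_sym e.
- by rewrite trmx_mul !mulmxA h1 h2 h2' h1'.
- by rewrite orth_inv ?trmxK //; exact: H3_orth.
Qed.

Lemma dot_orth (x y : vec R) h : h *m h^T = 1%:M -> dot (x *m h) (y *m h) = dot x y.
Proof. by move=> o; rewrite /dot trmx_mul mulmxA -(mulmxA x) o mulmx1. Qed.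

Lemma dot_e1v_r (x : vec R) : dot x e1v = x 0 0.
Proof. by rewrite dot_sym dot_e1v. Qed.

Lemma Sigma3_first (x : vec R) : Sigma3 x -> x 0 0 = 0.
Proof.
case=> g [a [hg [ha ->]]].
rewrite -dot_e1v_r /dot.
have [_ f'] := H3_fix _ hg.
have f2 : g *m e1v^T = e1v^T by rewrite -[in RHS]f' trmx_mul trmxK.
rewrite -mulmxA f2.
by have := ha.2; rewrite -dot_e1v_r /dot.
Qed.
End RK.

Section RL.
Variable R : rcfType.
Notation phi := (@phi R).
Notation ofV := (@ofV R).
Notation e1v := (@e1v R).
Notation e2v := (@e2v R).

Lemma good4 u : dotV u u = nrm 1 -> exists h, Hinf h /\ ofV u 1 *m h = e1v.
Proof.
move=> hu; apply: (@grow_sound R (@DD R) U4 e1v 6 [:: e1c]); last exact: in_cl4.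
  exact: U4_ok.
move=> w; rewrite inE => /eqP ->; exists 1%:M; split; [exact: GG_one | exact: mulmx1].
Qed.

Lemma good3 u : g0 u = Z0 -> dotV u u = nrm 1 -> exists h, H3 h /\ ofV u 1 *m h = e2v.
Proof.
move=> hz hu; apply: (@grow_sound R (@DD3 R) U3 e2v 6 [:: e2c]); last exact: in_cl3.
  exact: U3_ok.
move=> w; rewrite inE => /eqP ->; exists 1%:M; split; [exact: GG_one | exact: mulmx1].
Qed.

Lemma g0_of u k : (ofV u k) 0 0 = 0 -> g0 u = Z0.
Proof.
rewrite mxE => h; apply: (@phi0 R).
have : cf u 0 = g0 u by [].
move=> e; rewrite -e; apply/eqP; move/eqP: h.
by rewrite mulf_eq0 invr_eq0 (negbTE (exp2_neq0 R k)) orbF.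
Qed.

Lemma four_exp : ((4 : int)%:~R : R) = 2 ^+ 2.
Proof. by rewrite expr2; ring. Qed.
Lemma two_exp : ((2 : int)%:~R : R) = 2 ^+ 1.
Proof. by rewrite expr1; ring. Qed.

Lemma descent3 k : forall w, g0 w = Z0 -> dotV w w = nrm k -> exists h, H3 h /\ ofV w k *m h = e2v.
Proof.
elim/ltn_ind: k => k IH w h0 hw.
case: k IH hw => [|[|k]] IH hw.
- have := good3 (mapV (zsc 2) w).
  rewrite ofV_dbl; apply.
    by rewrite /mapV /g0 /= -/(g0 w) h0 /zsc /= mulr0.
  exact: nrm_dbl.
- exact: good3.
case: (boolP (alldv 2 w)) => h2.
- set w' := mapV (zdiv 2) w.
  have e : ofV w k.+2 = ofV w' k.+1 by rewrite -(ofV_div R _ _ _ _ two_exp h2) addn1.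
  have n' : dotV w' w' = nrm k.+1 by apply: (nrm_div R _ _ _ _ two_exp h2); rewrite addn1.
  have z' : g0 w' = Z0 by rewrite /w' /mapV /g0 /= -/(g0 w) h0 /zdiv /= div0z.
  by rewrite e; apply: IH.
- have hd : zdv 4 (dotV w w).
    rewrite hw /nrm /zdv /= dvdz0 andbT.
    by rewrite !exprS mulrA dvdz_mulr.
  have [u hu h4] := residue _ h0 hd h2.
  have [[hDD hu0] nu] := Ures_ok R _ hu.
  have gu : g0 u = Z0 by apply: (g0_of _ 1).
  set r := reflV w u; set w' := mapV (zdiv 4) r.
  have e : ofV w k.+2 *m refl (ofV u 1) = ofV w' k.+1.
    by rewrite ofV_refl -(ofV_div R _ _ _ _ four_exp h4) addn2.
  have nr : dotV r r = nrm k.+3 by apply: nrm_refl.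
  have n' : dotV w' w' = nrm k.+1 by apply: (nrm_div R _ _ _ _ four_exp h4); rewrite addn2.
  have gr : g0 r = Z0.
    have -> : g0 r = rc (dotV w u) (g0 w) (g0 u) by [].
    rewrite h0 gu /rc /zadd /zsc /zmul /Z0 /=; congr pair; ring.
  have z' : g0 w' = Z0.
    have -> : g0 w' = zdiv 4 (g0 r) by [].
    by rewrite gr /zdiv /= div0z.
  have [h' [Hh' eh']] := IH k.+1 (ltnSn _) w' z' n'.
  exists (refl (ofV u 1) *m h'); split; first by apply: GG_mul => //; exact: GG_gen.
  by rewrite mulmxA e.
Qed.
End RL.

Section RM.
Variable R : rcfType.
Notation phi := (@phi R).
Notation ofV := (@ofV R).
Notation e1v := (@e1v R).
Notation e2v := (@e2v R).

Lemma Hinf_unit (g : 'M[R]_4) : Hinf g -> g \in unitmx.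
Proof. by move/Hinf_orth/orth_unit. Qed.
Lemma H3_unit (g : 'M[R]_4) : H3 g -> g \in unitmx.
Proof. by move/H3_orth/orth_unit. Qed.

Lemma e1v_DD : DD e1v.
Proof. by left; exact: (gen10 R).1. Qed.
Lemma e2v_DD3 : DD3 e2v.
Proof. by split; [left; exact: (gen11 R).1 | exact: first0]. Qed.

Lemma S1 (x : vec R) : Sigma x -> exists h, Hinf h /\ x = e1v *m h.
Proof.
case=> g [a [hg [ha ->]]].
have [u [ea nu]] := DD_conc R a ha.
have [h0 [H0 e0]] := good4 R u nu.
exists (invmx h0 *m g); split; first by apply: GG_mul => //; exact: GG_inv.
by rewrite mulmxA -e0 -ea mulmxK // Hinf_unit.
Qed.

Lemma S6 (x : vec R) : Sigma3 x -> exists h, H3 h /\ x = e2v *m h.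
Proof.
case=> g [a [hg [ha ->]]].
have [u [ea nu]] := DD3_conc R a ha.
have gu : g0 u = Z0 by apply: (g0_of R _ 1); rewrite -ea; exact: ha.2.
have [h0 [H0 e0]] := descent3 R 1 u gu nu.
exists (invmx h0 *m g); split; first by apply: GG_mul => //; exact: GG_inv.
by rewrite mulmxA -e0 -ea mulmxK // H3_unit.
Qed.

Lemma S2 (x : vec R) : Sigma x -> exists w k, x = ofV w k /\ dotV w w = nrm k.
Proof.
case=> g [a [hg [ha ->]]].
have [u [-> nu]] := DD_conc R a ha.
have [_ [p _]] := @GG_inv_all R _ _ (DD_conc R) hg.
have [w' [k' [e n]]] := p u 1 nu.
by exists w', k'.
Qed.

Lemma S3 (x : vec R) h : Sigma x -> Hinf h -> Sigma (x *m h).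
Proof.
case=> g [a [hg [ha ->]]] Hh.
by exists (g *m h), a; split; [exact: GG_mul | split; [|rewrite mulmxA]].
Qed.

Lemma S3' (x : vec R) h : Sigma3 x -> H3 h -> Sigma3 (x *m h).
Proof.
case=> g [a [hg [ha ->]]] Hh.
by exists (g *m h), a; split; [exact: GG_mul | split; [|rewrite mulmxA]].
Qed.

Lemma S3S (x : vec R) : Sigma3 x -> Sigma x.
Proof.
case=> g [a [hg [ha ->]]].
by exists g, a; split; [exact: H3_Hinf | split; [exact: DD3_DD|]].
Qed.

Lemma S5 (x : vec R) : Sigma x -> x 0 0 = 0 -> Sigma3 x.
Proof.
move=> hx x0; have [w [k [ex nw]]] := S2 x hx.
have gw : g0 w = Z0 by apply: (g0_of R _ k); rewrite -ex.
have [h [Hh eh]] := descent3 R k w gw nw.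
exists (invmx h), e2v; split; first exact: GG_inv.
split; first exact: e2v_DD3.
by rewrite -eh ex mulmxK // H3_unit.
Qed.

Lemma main_aux :
  (forall x y : vec R, Sigma x -> Sigma y ->
     exists g, Hinf g /\ y = x *m g)
  /\ (forall x y : vec R, Sigma3 x -> Sigma3 y ->
     exists g, H3 g /\ y = x *m g)
  /\ (forall alpha : vec R, Sigma alpha ->
     exists g, Hinf g /\
       forall beta : vec R, (Sigma beta /\ dot beta alpha = 0) <->
         (exists gamma, Sigma3 gamma /\ beta = gamma *m g))
  /\ (forall alpha : vec R, Sigma alpha ->
     exists h, Hinf h /\
       forall g, H3 g ->
         Hinf (invmx h *m g *m h) /\ alpha *m (invmx h *m g *m h) = alpha).
Proof.
split.
  move=> x y /S1 [hx [Hx ->]] /S1 [hy [Hy ->]].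
  exists (invmx hx *m hy); split; first by apply: GG_mul => //; exact: GG_inv.
  by rewrite mulmxA mulmxK // Hinf_unit.
split.
  move=> x y /S6 [hx [Hx ->]] /S6 [hy [Hy ->]].
  exists (invmx hx *m hy); split; first by apply: GG_mul => //; exact: GG_inv.
  by rewrite mulmxA mulmxK // H3_unit.
split.
  move=> alpha /S1 [h [Hh ->]].
  have o := Hinf_orth R _ Hh.
  exists h; split => // beta; split.
    move=> [hb hd]; exists (beta *m invmx h); split; last by rewrite mulmxKV // Hinf_unit.
    apply: S5; first by apply: S3 => //; exact: GG_inv.
    rewrite -dot_e1v_r -(dot_orth R _ _ _ o) mulmxKV //; exact: Hinf_unit.
  move=> [gamma [hg ->]]; split; first by apply: S3 => //; exact: S3S.
  by rewrite (dot_orth R _ _ _ o) dot_e1v_r Sigma3_first.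
move=> alpha /S1 [h [Hh ->]].
exists h; split => // g Hg; split.
  by apply: GG_mul => //; apply: GG_mul; [exact: GG_inv | exact: H3_Hinf].
have [f _] := H3_fix R _ Hg.
by rewrite !mulmxA mulmxK ?Hinf_unit // f.
Qed.

End RM.

Theorem mainTheorem10 (R : rcfType) :
  (forall x y : vec R, Sigma x -> Sigma y ->
     exists g, Hinf g /\ y = x *m g)
  /\ (forall x y : vec R, Sigma3 x -> Sigma3 y ->
     exists g, H3 g /\ y = x *m g)
  /\ (forall alpha : vec R, Sigma alpha ->
     exists g, Hinf g /\
       forall beta : vec R, (Sigma beta /\ dot beta alpha = 0) <->
         (exists gamma, Sigma3 gamma /\ beta = gamma *m g))
  /\ (forall alpha : vec R, Sigma alpha ->
     exists h, Hinf h /\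
       forall g, H3 g ->
         Hinf (invmx h *m g *m h) /\ alpha *m (invmx h *m g *m h) = alpha).
Proof. exact: main_aux. Qed.
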